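(* Let $2\le n\le l$ be integers and let $L_l=\{a_1<\dots<a_l\}$ be the linearly ordered semilattice of $l$ elements. Let $Eq(n)$ be the set of equations in the variables $X=\{x_1,\dots,x_n\}$, where an equation $t(X)=s(X)$ is identified with the ordered pair $(\mathrm{Var}(t),\mathrm{Var}(s))$ of nonempty subsets of $X$ with $\mathrm{Var}(t)\cup\mathrm{Var}(s)=X$ (so $|Eq(n)|=3^n-2$). For each equation let $\mathrm{Irr}$ denote the number of irreducible components of its solution set in $L_l^n$. Then the average of $\mathrm{Irr}$ over $Eq(n)$ is $$\overline{\mathrm{Irr}}(n)=\frac{4\,n!\,3^{n-2}}{3^n-2},$$ in particular $\overline{\mathrm{Irr}}(n)\sim \frac{4}{9}n!$ as $n\to\infty$; this value does not depend on $l$.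
   Context: $L_l$ has multiplication $a_ia_j=a_{\min(i,j)}$. A term is a commutative word in $x_1,\dots,x_n$; $\mathrm{Var}(t)$ is the set of variables occurring in $t$; the solution set of $t(X)=s(X)$ depends only on $\mathrm{Var}(t)$ and $\mathrm{Var}(s)$. Equations are ordered pairs, so $t=s$ and $s=t$ are counted as different equations. $P\in L_l^n$ is a solution if $t(P)=s(P)$. For a system $S$, $V(S)$ is its set of common solutions; $Y\subseteq L_l^n$ is algebraic if $Y=V(S)$ for some system $S$; an algebraic set is irreducible if it is not a proper finite union of other algebraic sets. Every algebraic set is uniquely (up to order) a finite union $Y_1\cup\dots\cup Y_m$ of irreducible algebraic sets with $Y_i\not\subseteq Y_j$ for $i\ne j$; these are its irreducible components. *)

(* Defs.v *)
From mathcomp Require Import all_boot all_order all_algebra.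
Set Implicit Arguments. Unset Strict Implicit. Unset Printing Implicit Defensive.

(* L_l = {a_1 < ... < a_l} is modelled by 'I_l (a_{i+1} <-> i), with
   multiplication a_i a_j = a_{min(i,j)}.  A term (commutative word in x_1..x_n) only
   matters through its nonempty variable set A : {set 'I_n}; its value at P
   is the product (= minimum) of the P i, i in A. *)

Definition point (n l : nat) := {ffun 'I_n -> 'I_l}.
Definition equation (n : nat) := ({set 'I_n} * {set 'I_n})%type.

Definition term_val n l (A : {set 'I_n}) (P : point n l) : nat :=
  \big[minn/l]_(i in A) (P i : nat).

Definition is_equation n (e : equation n) : bool :=
  (e.1 != set0) && (e.2 != set0).

Definition solutions n l (e : equation n) : {set point n l} :=
  [set P | term_val e.1 P == term_val e.2 P].

Definition V n l (S : {set equation n}) : {set point n l} :=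
  [set P | [forall e in S, P \in solutions l e]].

Definition algebraic n l (Y : {set point n l}) : bool :=
  [exists S : {set equation n},
     [forall e in S, is_equation e] && (Y == V l S)].

Definition irreducible n l (Y : {set point n l}) : bool :=
  algebraic Y &&
  [forall F : {set {set point n l}},
     ([forall Z in F, algebraic Z] && (Y == cover F)) ==> (Y \in F)].

Definition irr_decomp n l (Y : {set point n l}) (C : {set {set point n l}}) : bool :=
  [forall Z in C, irreducible Z] && (Y == cover C) &&
  [forall Z1 in C, forall Z2 in C, (Z1 != Z2) ==> ~~ (Z1 \subset Z2)].

(* number of irreducible components (unique by the decomposition theorem) *)
Definition Irr n l (Y : {set point n l}) : nat :=
  odflt 0 (omap (fun C : {set {set point n l}} => #|C|) [pick C | irr_decomp Y C]).

Definition Eqn (n : nat) : {set equation n} :=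
  [set e : equation n | is_equation e & e.1 :|: e.2 == setT].

(* Main.v *)
Require Import Defs.
From mathcomp Require Import all_boot all_order all_algebra all_fingroup.
From mathcomp Require Import zify.
Set Implicit Arguments. Unset Strict Implicit. Unset Printing Implicit Defensive.

Section Perm.
Variable n : nat.

Lemma card_lt_ord s : s <= n -> #|[set k : 'I_n | k < s]| = s.
Proof.
move=> hs; have -> : [set k : 'I_n | k < s] = widen_ord hs @: [set: 'I_s].
  apply/setP=> k; rewrite inE; apply/idP/imsetP.
    by move=> ks; exists (Ordinal ks); rewrite ?inE //; apply: val_inj.
  by case=> k' _ ->; rewrite /= ltn_ord.
rewrite card_imset; first by rewrite cardsT card_ord.
by move=> a b [] /val_inj.
Qed.

Lemma card_perm_lt (s : 'S_n) m : m <= n -> #|[set j | s j < m]| = m.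
Proof.
move=> hm; have -> : [set j | s j < m] = s @^-1: [set k : 'I_n | k < m].
  by apply/setP=> j; rewrite !inE.
by rewrite card_preimset ?card_lt_ord //; apply: perm_inj.
Qed.

Lemma cnt_eq (f g : 'I_n -> nat) k : (forall i j, (f i <= f j) = (g i <= g j)) ->
  #|[set j | f j < f k]| = #|[set j | g j < g k]|.
Proof. by move=> h; apply: eq_card => j; rewrite !inE !ltnNge h. Qed.

Lemma perm_ex (s : 'S_n) m : m < n -> exists a, s a = m :> nat.
Proof. by move=> hm; exists ((s^-1)%g (Ordinal hm)); rewrite permKV. Qed.

Lemma perm_natinj (s : 'S_n) i j : s i = s j :> nat -> i = j.
Proof. by move/val_inj/perm_inj. Qed.

Lemma sort_perm (key : 'I_n -> nat) : injective key ->
  exists s : 'S_n, forall i j, (s i < s j) = (key i < key j).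
Proof.
move=> ik.
pose rk i := #|[set j | key j < key i]|.
have rkn i : rk i < n.
  have : [set j | key j < key i] \subset [set~ i].
    by apply/subsetP=> j; rewrite !inE; apply: contraTneq => ->; rewrite ltnn.
  move/subset_leq_card; rewrite cardsC1 card_ord => h.
  apply: (leq_ltn_trans h); case: n i {h} => [[]|m] //= _ _.
have mono i j : key i < key j -> rk i < rk j.
  move=> h; apply: proper_card; rewrite properE; apply/andP; split.
    by apply/subsetP=> k; rewrite !inE => /ltn_trans; apply.
  by apply/subsetPn; exists i; rewrite !inE ?h ?ltnn.
have iff i j : (rk i < rk j) = (key i < key j).
  apply/idP/idP; last exact: mono.
  case: (ltngtP (key i) (key j)) => // h.
    by move=> h2; have := ltn_trans h2 (mono _ _ h); rewrite ltnn.
  by move: h => /ik ->; rewrite ltnn.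
pose f i := Ordinal (rkn i).
have finj : injective f.
  move=> i j /(congr1 val) /= e.
  case: (ltngtP (key i) (key j)) => h; last exact: ik.
    by have := iff i j; rewrite h e ltnn.
  by have := iff j i; rewrite h e ltnn.
by exists (perm finj) => i j; rewrite !permE /= iff.
Qed.

End Perm.

Section Geo.
Variables n l : nat.
Implicit Types (P p q : point n l) (A B : {set 'I_n}) (Y Z : {set point n l}).

Lemma bigmin_le (I : eqType) (r : seq I) (Pr : pred I) (F : I -> nat) m j :
  j \in r -> Pr j -> \big[minn/m]_(i <- r | Pr i) F i <= F j.
Proof.
elim: r => // x r IH; rewrite inE big_cons => /orP[/eqP<-|jr] Pj.
  by rewrite Pj geq_minl.
case: ifP => _; last exact: IH.
by rewrite (leq_trans (geq_minr _ _)) // IH.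
Qed.

Lemma bigmin_ex (I : Type) (r : seq I) (Pr : pred I) (F : I -> nat) m :
  \big[minn/m]_(i <- r | Pr i) F i = m \/
  exists i, Pr i /\ \big[minn/m]_(i <- r | Pr i) F i = F i.
Proof.
apply: (big_ind (fun x => x = m \/ exists i, Pr i /\ x = F i)); first by left.
  by move=> x y Hx Hy; case: (leqP x y).
by move=> i Pi; right; exists i.
Qed.

Lemma tv_le A P j : j \in A -> term_val A P <= P j.
Proof. by move=> jA; apply: bigmin_le => //; rewrite mem_index_enum. Qed.

Lemma tv_ex A P : A != set0 -> exists2 i, i \in A & term_val A P = P i.
Proof.
case/set0Pn=> j jA.
case: (bigmin_ex (index_enum 'I_n) (mem A) (fun i => (P i : nat)) l).
  move=> h; have := tv_le P jA; rewrite /term_val h => hl.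
  by have := ltn_ord (P j); rewrite ltnNge hl.
by case=> i [iA h]; exists i.
Qed.

Definition cl q : {set point n l} :=
  [set p : point n l | [forall i, forall j, (q i <= q j) ==> (p i <= p j)]].

Lemma clP q p : reflect (forall i j, q i <= q j -> p i <= p j) (p \in cl q).
Proof.
rewrite inE; apply: (iffP forallP) => [h i j|h i].
  by move/forallP: (h i) => /(_ j)/implyP.
by apply/forallP=> j; apply/implyP; apply: h.
Qed.

Lemma cl_refl q : q \in cl q.
Proof. by apply/clP. Qed.

Lemma cl_trans p q : p \in cl q -> cl p \subset cl q.
Proof.
move/clP=> h; apply/subsetP=> r /clP hr; apply/clP=> i j /h; exact: hr.
Qed.

Lemma cl_sol q (e : equation n) : is_equation e -> q \in solutions l e ->
  cl q \subset solutions l e.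
Proof.
case: e => A B /andP[/= A0 B0]; rewrite inE /= => /eqP hq.
have [i iA hi] := tv_ex q A0; have [j jB hj] := tv_ex q B0.
apply/subsetP=> p /clP hp; rewrite inE /=.
have eA : term_val A p = p i.
  have [i' i'A e'] := tv_ex p A0; rewrite e'; apply/eqP; rewrite eqn_leq; apply/andP; split.
    by rewrite -e' tv_le.
  by apply: hp; rewrite -hi tv_le.
have eB : term_val B p = p j.
  have [j' j'B e'] := tv_ex p B0; rewrite e'; apply/eqP; rewrite eqn_leq; apply/andP; split.
    by rewrite -e' tv_le.
  by apply: hp; rewrite -hj tv_le.
rewrite eA eB eqn_leq !hp //; rewrite -hi -hj hq //.
Qed.

Lemma alg_sub Y q : algebraic Y -> q \in Y -> cl q \subset Y.
Proof.
case/existsP=> S /andP[/forallP hS /eqP ->] qV.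
apply/subsetP=> p pc; rewrite inE; apply/forallP=> e; apply/implyP=> eS.
move: qV; rewrite inE => /forallP/(_ e)/implyP/(_ eS) qe.
have := cl_sol (implyP (hS e) eS) qe => /subsetP; apply; exact: pc.
Qed.

Lemma cl_alg q : algebraic (cl q).
Proof.
apply/existsP; exists [set e : equation n | is_equation e & q \in solutions l e].
apply/andP; split.
  by apply/forallP=> e; apply/implyP; rewrite inE => /andP[].
apply/eqP/setP=> p; apply/idP/idP.
  move=> pc; rewrite inE; apply/forallP=> e; apply/implyP; rewrite inE => /andP[he qe].
  by have := cl_sol he qe => /subsetP; apply.
rewrite inE => /forallP hp; apply/clP=> i j hij.
have he : is_equation ([set i], [set i; j]).
  by rewrite /is_equation /=; apply/andP; split; apply/set0Pn; exists i; rewrite !inE eqxx.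
have tvi (r : point n l) : term_val [set i] r = r i.
  have [k] := tv_ex r (proj1 (andP he)); by rewrite inE => /eqP->.
have tvij (r : point n l) : r i <= r j -> term_val [set i; j] r = r i.
  move=> h; have [k] := tv_ex r (proj2 (andP he)).
  rewrite !inE => /orP[]/eqP-> // e; rewrite /= in e; rewrite e; apply/eqP; rewrite eqn_leq h andbT -e tv_le //.
  by rewrite !inE eqxx.
have := hp ([set i], [set i; j]); rewrite inE he inE /= tvi tvij // eqxx /=.
rewrite inE /= tvi => /eqP ->; apply: tv_le; by rewrite !inE eqxx orbT.
Qed.

Lemma alg_cap Y Z : algebraic Y -> algebraic Z -> algebraic (Y :&: Z).
Proof.
case/existsP=> S /andP[/forallP hS /eqP ->]; case/existsP=> T /andP[/forallP hT /eqP ->].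
apply/existsP; exists (S :|: T); apply/andP; split.
  apply/forallP=> e; apply/implyP; rewrite inE => /orP[] h.
    exact: (implyP (hS e)). exact: (implyP (hT e)).
apply/eqP/setP=> p; rewrite !inE; apply/andP/forallP.
  case=> /forallP h1 /forallP h2 e; apply/implyP; rewrite inE => /orP[] h.
    exact: (implyP (h1 e)). exact: (implyP (h2 e)).
move=> h; split; apply/forallP=> e; apply/implyP=> h'; apply: (implyP (h e)); by rewrite inE h' ?orbT.
Qed.

Lemma cl_irr q : irreducible (cl q).
Proof.
rewrite /irreducible cl_alg /=; apply/forallP=> F; apply/implyP=> /andP[/forallP hF /eqP hc].
have : q \in cover F by rewrite -hc cl_refl.
case/bigcupP=> Z ZF qZ.
have hZ : Z = cl q.
  apply/eqP; rewrite eqEsubset; apply/andP; split.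
    by rewrite hc; apply: bigcup_sup.
  exact: alg_sub (implyP (hF Z) ZF) qZ.
by rewrite -hZ.
Qed.


Lemma decomp_sub Y C D : irr_decomp Y C -> irr_decomp Y D -> C \subset D.
Proof.
case/andP=> [/andP[/forallP iC /eqP YC] /forallP aC].
case/andP=> [/andP[/forallP iD /eqP YD] /forallP aD].
apply/subsetP=> Z ZC.
have irrZ := implyP (iC Z) ZC.
have algZ : algebraic Z by case/andP: irrZ.
have ZY : Z \subset Y by rewrite YC; apply: bigcup_sup.
have sub1 : forall (C' D' : {set {set point n l}}) Z', Z' \in C' -> irreducible Z' ->
  Z' \subset cover D' -> (forall W, W \in D' -> algebraic W) ->
  exists2 W, W \in D' & Z' \subset W.
  move=> C' D' Z' _ iZ sZ aW.
  case/andP: (iZ) => aZ /forallP/(_ [set Z' :&: W | W in D']) /implyP h.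
  have : Z' \in [set Z' :&: W | W in D'].
    apply: h; apply/andP; split.
      apply/forallP=> X; apply/implyP=> /imsetP[W WD ->]; apply: alg_cap => //; exact: aW.
    apply/eqP/setP=> x; apply/idP/idP.
      move=> xZ; have := subsetP sZ x xZ; case/bigcupP=> W WD xW.
      by apply/bigcupP; exists (Z' :&: W); [apply/imsetP; exists W|rewrite inE xZ].
    by case/bigcupP=> X /imsetP[W _ ->]; rewrite inE => /andP[].
  case/imsetP=> W WD eZ; exists W => //; rewrite eZ; exact: subsetIr.
have sZD : Z \subset cover D by rewrite -YD.
have [W WD ZW] := sub1 C D Z ZC irrZ sZD (fun W h => proj1 (andP (implyP (iD W) h))).
have WY : W \subset Y by rewrite YD; apply: bigcup_sup.
have sWC : W \subset cover C by rewrite -YC.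
have [Z' Z'C WZ'] := sub1 D C W WD (implyP (iD W) WD) sWC
   (fun W h => proj1 (andP (implyP (iC W) h))).
have eZZ' : Z = Z'.
  apply/eqP; apply: contraT => ne.
  by have := implyP (forallP (implyP (aC Z) ZC) Z') Z'C; rewrite ne (subset_trans ZW WZ').
suff -> : Z = W by [].
by apply/eqP; rewrite eqEsubset ZW /= -eZZ' in WZ' *; rewrite WZ'.
Qed.

Lemma Irr_eq Y C : irr_decomp Y C -> Irr Y = #|C|.
Proof.
move=> hC; rewrite /Irr; case: pickP => [D hD|/(_ C)]; last by rewrite hC.
have -> // : D = C by apply/eqP; rewrite eqEsubset !(decomp_sub hC, decomp_sub hD).
Qed.

Definition minimal Y q := (q \in Y) && [forall p in Y, (q \in cl p) ==> (p \in cl q)].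

Lemma decomp_min Y : algebraic Y -> irr_decomp Y (cl @: [set q | minimal Y q]).
Proof.
move=> aY; apply/andP; split; first (apply/andP; split).
- by apply/forallP=> Z; apply/implyP=> /imsetP[q _ ->]; apply: cl_irr.
- apply/eqP/setP=> p; apply/idP/idP => [pY|]; last first.
    case/bigcupP=> Z /imsetP[q]; rewrite inE => /andP[qY _] -> pq.
    exact: (subsetP (alg_sub aY qY)).
  have P0 : (p \in Y) && (p \in cl p) by rewrite pY cl_refl.
  case: (@arg_maxnP _ p (fun q => (q \in Y) && (p \in cl q)) (fun q => #|cl q|) P0) => q /andP[qY pq] hmax.
  apply/bigcupP; exists (cl q) => //; apply/imsetP; exists q => //.
  rewrite inE /minimal qY; apply/forallP=> r; apply/implyP=> rY; apply/implyP=> qr.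
  have sub := cl_trans qr.
  have pr : p \in cl r by apply: (subsetP sub).
  have := hmax r; rewrite rY pr => /(_ isT) hc.
  have -> : cl q = cl r by apply/eqP; rewrite eqEcard sub; exact: hc.
  exact: cl_refl.
- apply/forallP=> Z1; apply/implyP=> /imsetP[q1]; rewrite inE => /andP[q1Y /forallP m1] ->.
  apply/forallP=> Z2; apply/implyP=> /imsetP[q2]; rewrite inE => /andP[q2Y /forallP m2] ->.
  apply/implyP; apply: contra => sub12.
  have h12 : q1 \in cl q2 by apply: (subsetP sub12); exact: cl_refl.
  have h21 := implyP (implyP (m1 q2) q2Y) h12.
  by rewrite eqEsubset sub12 cl_trans.
Qed.

End Geo.

Section Eq.
Variables (n L : nat) (A B : {set 'I_n}).

Definition t1 (s : 'S_n) := [forall i, (s i == 0 :> nat) ==> (i \in A) && (i \in B)].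
Definition t2 (s : 'S_n) := [forall i, ((s i == 0 :> nat) ==> (i \in A) && (i \notin B))
   && ((s i == 1 :> nat) ==> (i \in B) && (i \notin A))].
Definition G := [set s | t1 s || t2 s].
Definition rk (s : 'S_n) i : nat := if t1 s then nat_of_ord (s i) else (s i).-1.
Definition Q (s : 'S_n) : point n L.+1 := [ffun i => inord (rk s i)].

Hypothesis hn : 1 < n.
Hypothesis hnl : n <= L.+1.
Hypothesis hAB : A :|: B = setT.
Hypothesis hA : A != set0.
Hypothesis hB : B != set0.

Local Notation Y := (solutions L.+1 (A, B)).

Lemma t1P s : t1 s -> forall i, s i = 0 :> nat -> i \in A /\ i \in B.
Proof. by move/forallP=> h i /eqP e; have /implyP/(_ e)/andP := h i. Qed.

Lemma t2P0 s : t2 s -> forall i, s i = 0 :> nat -> i \in A /\ i \notin B.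
Proof. by move/forallP=> h i /eqP e; have /andP[/implyP/(_ e)/andP ? _] := h i. Qed.

Lemma t2P1 s : t2 s -> forall i, s i = 1 :> nat -> i \in B /\ i \notin A.
Proof. by move/forallP=> h i /eqP e; have /andP[_ /implyP/(_ e)/andP ?] := h i. Qed.

Lemma Qv s i : Q s i = rk s i :> nat.
Proof.
rewrite ffunE inordK // /rk; have := ltn_ord (s i); case: ifP => _; lia.
Qed.

Lemma in_AB i : (i \in A) || (i \in B).
Proof. by rewrite -in_setU hAB inE. Qed.

Lemma globmin p : p \in Y -> exists i1, exists j1,
  [/\ i1 \in A, j1 \in B, p i1 = p j1 :> nat & forall x, p i1 <= p x].
Proof.
rewrite inE /= => /eqP e.
have [i1 i1A h1] := tv_ex p hA; have [j1 j1B h2] := tv_ex p hB.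
exists i1, j1; split => //; first by rewrite -h1 -h2.
move=> x; case/orP: (in_AB x) => hx; first by rewrite -h1 tv_le.
by rewrite -h1 e tv_le.
Qed.

Lemma tv0 (P : point n L.+1) (C : {set 'I_n}) i : i \in C -> P i = 0 :> nat -> term_val C P = 0.
Proof. by move=> iC e; apply/eqP; rewrite -leqn0 -e tv_le. Qed.

Lemma Q_in s : s \in G -> Q s \in Y.
Proof.
rewrite inE => h.
have [a ha] := perm_ex s (ltnW hn); have [b hb] := perm_ex s hn.
rewrite inE /=; case t1s: (t1 s).
  have [aA aB] := t1P t1s ha.
  by rewrite (tv0 aA) ?(tv0 aB) // Qv /rk t1s ha.
rewrite t1s /= in h.
have [aA _] := t2P0 h ha; have [bB _] := t2P1 h hb.
by rewrite (tv0 aA) ?(tv0 bB) // Qv /rk t1s ?ha ?hb.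
Qed.

Lemma Q_min s : s \in G -> minimal Y (Q s).
Proof.
move=> sG; rewrite /minimal Q_in //=; apply/forallP=> p; apply/implyP=> pY.
apply/implyP=> /clP hp; apply/clP=> i j; rewrite !Qv => hij.
rewrite leqNgt; apply/negP=> hji.
have hrk : rk s i = rk s j.
  by apply/eqP; rewrite eqn_leq hij -!Qv hp // ltnW.
move: hrk; rewrite /rk; case t1s: (t1 s) => hrk.
  by move: hji; rewrite (perm_natinj hrk) ltnn.
move: sG; rewrite inE t1s /= => h.
have [i1 [j1 [i1A j1B e1 m1]]] := globmin pY.
have [a ha] := perm_ex s (ltnW hn).
have hi1 : s i1 = 0 :> nat.
  have := hp _ _ (m1 a); rewrite !Qv /rk t1s ha /=.
  case e: (s i1 : nat) => [|[|k]] // _.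
  by have [_] := t2P1 h e; rewrite i1A.
have hj1 : s j1 = 1 :> nat.
  have := hp j1 a; rewrite -e1 m1 !Qv /rk t1s ha /= => /(_ isT).
  case e: (s j1 : nat) => [|[|k]] // _.
  by have [_] := t2P0 h e; rewrite j1B.
have ne : i != j by apply: contraTneq hji => ->; rewrite ltnn.
have [ei|ei] : (s i = 0 :> nat /\ s j = 1 :> nat) \/ (s i = 1 :> nat /\ s j = 0 :> nat).
  have : s i != s j :> nat by apply: contra ne => /eqP/perm_natinj ->.
  move: hrk; case: (s i : nat) => [|[|x]]; case: (s j : nat) => [|[|y]] //=; try lia.
- move: ei => [ei ej].
  have E1 : i = i1 by apply: (@perm_natinj _ s); rewrite ei hi1.
  have E2 : j = j1 by apply: (@perm_natinj _ s); rewrite ej hj1.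
  by move: hji; rewrite E1 E2 e1 ltnn.
- move: ei => [ei ej].
  have E1 : i = j1 by apply: (@perm_natinj _ s); rewrite ei hj1.
  have E2 : j = i1 by apply: (@perm_natinj _ s); rewrite ej hi1.
  by move: hji; rewrite E1 E2 e1 ltnn.
Qed.

Lemma min_Q q : q \in Y -> exists2 s, s \in G & q \in cl (Q s).
Proof.
move=> qY; have [i1 [j1 [i1A j1B e1 m1]]] := globmin qY.
pose c x := if x \in B then (if x \in A then 0 else 2) else (if x == i1 then 1 else 3).
pose key x := (q x * 4 + c x) * n + x.
have n0 : 0 < n by apply: ltnW.
have kinj : injective key.
  move=> u v /(congr1 (modn^~ n)); rewrite /key !modnMDl !modn_small //.
  by move/val_inj.
have kle x y : key x <= key y -> q x * 4 + c x <= q y * 4 + c y.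
  by move/(leq_div2r n); rewrite /key !divnMDl // !divn_small // !addn0.
have c3 x : c x <= 3 by rewrite /c; do 3 case: ifP => //.
have c0 x : c x = 0 -> x \in A /\ x \in B.
  by rewrite /c; case xB: (x \in B); [case xA: (x \in A)|case: eqP].
have c1 x : c x = 1 -> x = i1 /\ x \notin B.
  by rewrite /c; case xB: (x \in B); [case xA: (x \in A)|case: eqP].
have c2 x : c x = 2 -> x \in B /\ x \notin A.
  by rewrite /c; case xB: (x \in B); [case xA: (x \in A)|case: eqP].
have [s hs] := sort_perm kinj.
have s0 k : s k = 0 :> nat -> forall j, key k <= key j.
  by move=> hk j; rewrite leqNgt -hs hk.
have s1 k : s k = 1 :> nat -> forall j, key j < key k -> s j = 0 :> nat.
  by move=> hk j; rewrite -hs hk; case: (s j : nat).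
have [a ha] := perm_ex s (ltnW hn).
have qle i j : s i <= s j -> q i <= q j.
  move=> h; have : key i <= key j by rewrite leqNgt -hs -leqNgt.
  move/kle; have := c3 i; have := c3 j; lia.
case: (boolP [exists z, [&& z \in A, z \in B & q z == q i1 :> nat]]) => hz.
  have t1s : t1 s.
    apply/forallP=> k; apply/implyP=> /eqP hk.
    case/existsP: hz => z /and3P[zA zB /eqP qz].
    have := kle _ _ (s0 k hk z); rewrite /c zA zB -/(c k) qz.
    have := m1 k; have := c3 k; have := c0 k => h0 hc hm hle.
    have ck : c k = 0 by lia.
    by have [-> ->] := h0 ck.
  exists s; first by rewrite inE t1s.
  by apply/clP=> i j; rewrite !Qv /rk t1s; apply: qle.
have noz k : k \in A -> k \in B -> q k = q i1 :> nat -> False.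
  by move=> kA kB qk; move/existsP: hz; apply; exists k; rewrite kA kB qk eqxx.
have i1B : i1 \notin B by apply/negP=> i1B; exact: noz i1 i1A i1B erefl.
have j1A : j1 \notin A by apply/negP=> j1A; apply: (noz j1 j1A j1B); rewrite e1.
have ci1 : c i1 = 1 by rewrite /c (negbTE i1B) eqxx.
have cj1 : c j1 = 2 by rewrite /c j1B (negbTE j1A).
have z0 k : s k = 0 :> nat -> k = i1 /\ q k = q i1 :> nat.
  move=> hk; have := kle _ _ (s0 k hk i1); rewrite ci1.
  have := m1 k; have := c3 k => hc hm hle.
  have qk : q k = q i1 :> nat by lia.
  have : c k <= 1 by lia.
  case ck: (c k) => [|[|]] // _.
    by have [kA kB] := c0 k ck; case: (noz k kA kB qk).
  by have [-> _] := c1 k ck.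
have si1 : s i1 = 0 :> nat by have [<- _] := z0 a ha.
have z1 k : s k = 1 :> nat -> [/\ k \in B, k \notin A & q k = q i1 :> nat].
  move=> hk.
  have kj : key k <= key j1.
    rewrite leqNgt; apply/negP=> /(s1 k hk) /z0 [ej _].
    by move: j1B; rewrite ej (negbTE i1B).
  have := kle _ _ kj; rewrite cj1 -e1.
  have := m1 k; have := c3 k => hc hm hle.
  have qk : q k = q i1 :> nat by lia.
  have : c k <= 2 by lia.
  case ck: (c k) => [|[|[|]]] // _.
  - by have [kA kB] := c0 k ck; case: (noz k kA kB qk).
  - by have [ek _] := c1 k ck; move: hk; rewrite ek si1.
  - by have [kB kA] := c2 k ck.
have t1s : t1 s = false.
  apply/negP=> /t1P /(_ _ si1) [_]; by rewrite (negbTE i1B).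
have t2s : t2 s.
  apply/forallP=> k; apply/andP; split; apply/implyP=> /eqP hk.
    by have [-> _] := z0 k hk; rewrite i1A.
  by have [-> -> _] := z1 k hk.
exists s; first by rewrite inE t2s orbT.
apply/clP=> i j; rewrite !Qv /rk t1s => h.
case: (leqP (s i) (s j)) => hij; first exact: qle.
have sj : s j = 0 :> nat by lia.
have si : s i = 1 :> nat by lia.
have [_ qj] := z0 j sj; have [_ _ qi] := z1 i si.
by rewrite qi qj.
Qed.

Lemma cnt_rk s k : s \in G -> #|[set j | rk s j < rk s k]| =
  if t1 s then nat_of_ord (s k) else (if s k <= 1 then 0 else nat_of_ord (s k)).
Proof.
move=> sG; rewrite /rk; case: (t1 s).
  by rewrite card_perm_lt // ltnW.
case: leqP => h.
  apply/eqP; rewrite cards_eq0; apply/eqP/setP=> j; rewrite !inE; lia.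
have -> : [set j | (s j).-1 < (s k).-1] = [set j | s j < s k].
  by apply/setP=> j; rewrite !inE; lia.
by rewrite card_perm_lt // ltnW.
Qed.

Lemma Q_inj : {in G &, injective (fun s => cl (Q s))}.
Proof.
move=> s u sG uG /= e.
have rel i j : (rk s i <= rk s j) = (rk u i <= rk u j).
  rewrite -!Qv; apply/idP/idP.
    have : Q u \in cl (Q s) by rewrite e cl_refl.
    by move/clP; apply.
  have : Q s \in cl (Q u) by rewrite -e cl_refl.
  by move/clP; apply.
have cnt k := etrans (esym (cnt_rk k sG)) (etrans (cnt_eq k rel) (cnt_rk k uG)).
have [a ha] := perm_ex s (ltnW hn); have [b hb] := perm_ex s hn.
have [a' ha'] := perm_ex u (ltnW hn); have [b' hb'] := perm_ex u hn.
case t1s: (t1 s); case t1u: (t1 u).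
- apply/permP=> k; apply: val_inj; have := cnt k; by rewrite t1s t1u.
- have := cnt a'; have := cnt b'; rewrite t1s t1u ha' hb' /= => h1 h2.
  have : a' = b' by apply: (@perm_natinj _ s); rewrite h1 h2.
  by move=> eab; move: ha'; rewrite eab hb'.
- have := cnt a; have := cnt b; rewrite t1s t1u ha hb /= => h1 h2.
  have : a = b by apply: (@perm_natinj _ u); rewrite -h1 -h2.
  by move=> eab; move: ha; rewrite eab hb.
- move: sG uG; rewrite !inE t1s t1u /= => t2s t2u.
  apply/permP=> k; apply: val_inj; have := cnt k; rewrite t1s t1u.
  have hs : (s k : nat) <= 1 -> (s k == 0 :> nat) = (k \in A).
    case e0: (s k : nat) => [|[|]] // _.
      by have [-> _] := t2P0 t2s e0.
    by have [_ /negbTE ->] := t2P1 t2s e0.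
  have hu : (u k : nat) <= 1 -> (u k == 0 :> nat) = (k \in A).
    case e0: (u k : nat) => [|[|]] // _.
      by have [-> _] := t2P0 t2u e0.
    by have [_ /negbTE ->] := t2P1 t2u e0.
  case: (leqP (s k) 1) => h1; case: (leqP (u k) 1) => h2 //; try lia.
  move=> _; have := hs h1; rewrite -(hu h2) => E /=.
  by move: h1 h2 E; case: (nat_of_ord (s k)) => [|[|]]; case: (nat_of_ord (u k)) => [|[|]].
Qed.

Lemma Irr_sol : Irr (solutions L.+1 (A, B)) = #|G|.
Proof.
have aY : algebraic Y.
  apply/existsP; exists [set (A, B)]; apply/andP; split.
    by apply/forallP=> e; apply/implyP; rewrite inE => /eqP ->; rewrite /is_equation hA hB.
  apply/eqP/setP=> p; rewrite !inE; apply/idP/forallP.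
    by move=> h e; apply/implyP; rewrite inE => /eqP ->; rewrite inE.
  by move/(_ (A, B)); rewrite inE eqxx /= inE.
rewrite (Irr_eq (decomp_min aY)) -(card_in_imset Q_inj).
apply: eq_card => Z; apply/imsetP/imsetP.
  case=> q; rewrite inE => /andP[qY /forallP mq] ->.
  have [s sG qs] := min_Q qY; exists s => //.
  apply/eqP; rewrite eqEsubset cl_trans //=; apply: cl_trans.
  exact: (implyP (implyP (mq _) (Q_in sG)) qs).
case=> s sG ->; exists (Q s) => //; rewrite inE; exact: Q_min.
Qed.

End Eq.


Section Count.
Variable n : nat.

Definition enc (e : equation n) : {ffun 'I_n -> bool * bool} :=
  [ffun x => (x \in e.1, x \in e.2)].
Definition dec (f : {ffun 'I_n -> bool * bool}) : equation n :=
  ([set x | (f x).1], [set x | (f x).2]).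

Lemma encK : cancel enc dec.
Proof. by case=> A B; rewrite /dec /enc; congr pair; apply/setP=> x; rewrite inE ffunE. Qed.
Lemma decK : cancel dec enc.
Proof. by move=> f; apply/ffunP=> x; rewrite ffunE /dec /= !inE; case: (f x). Qed.

Lemma count_fam (Qp : 'I_n -> pred (bool * bool)) :
  #|[set e : equation n | [forall x, Qp x (enc e x)]]| = \prod_x \sum_(j | Qp x j) 1.
Proof.
rewrite (bigA_distr_big_dep _ (fun _ _ => 1)).
rewrite (eq_bigr (fun _ => 1)); last by move=> f _; rewrite big1_eq.
rewrite sum1_card -(card_imset _ (can_inj encK)).
apply: eq_card => f; apply/imsetP/familyP => [[e] | h].
  by rewrite inE => /forallP h -> x; apply: h.
by exists (dec f); rewrite ?decK // inE; apply/forallP=> x; rewrite decK; apply: h.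
Qed.

Lemma sumC1 (c : bool * bool) : \sum_(j | j != c) 1 = 3.
Proof.
rewrite sum1dep_card; have -> : [set j | j != c] = [set~ c] by apply/setP=> j; rewrite !inE.
by rewrite cardsC1 card_prod card_bool.
Qed.

Lemma sum1 (c : bool * bool) : \sum_(j | j == c) 1 = 1.
Proof. by rewrite big_pred1_eq. Qed.

Lemma prod3 : \prod_(x : 'I_n) 3 = 3 ^ n.
Proof. by rewrite big_const card_ord iter_muln muln1. Qed.

Lemma prodC1 (a : 'I_n) : \prod_(x | x != a) 3 = 3 ^ n.-1.
Proof. by rewrite -(@eq_bigl _ _ _ _ _ [in predC1 a]) // prod_nat_const cardC1 card_ord. Qed.

Lemma fam_U A B : [forall x, enc (A, B) x != (false, false)] = (A :|: B == setT).
Proof.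
apply/forallP/eqP => [h|h x].
  apply/setP=> x; rewrite !inE; have := h x; rewrite ffunE /=.
  by case: (x \in A); case: (x \in B).
have := h; move/setP/(_ x); rewrite !inE ffunE /=.
by case: (x \in A); case: (x \in B).
Qed.

Lemma Eqn_card : 0 < n -> #|Eqn n| = 3 ^ n - 2.
Proof.
move=> n0.
pose U := [set e : equation n | [forall x, (fun _ j => j != (false, false)) x (enc e x)]].
have cU : #|U| = 3 ^ n.
  by rewrite count_fam (eq_bigr (fun _ => 3)) ?prod3 // => x _; rewrite sumC1.
pose P2 := [set ((set0 : {set 'I_n}), [set: 'I_n]); ([set: 'I_n], set0)].
have TS : [set: 'I_n] != set0 by apply/set0Pn; exists (Ordinal n0).
have -> : Eqn n = U :\: P2.
  apply/setP=> [[A B]]; rewrite !inE /= fam_U /is_equation /=.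
  rewrite !xpair_eqE.
  case: (A :|: B =P setT) => hT; last by rewrite !andbF.
  rewrite ?andbT.
  case: (A =P set0) => hA; case: (B =P set0) => hB //=.
  - by move: hT; rewrite hA hB setU0 => /esym/eqP; rewrite (negbTE TS).
  - by move: hT; rewrite hA set0U => ->; rewrite eqxx.
  - by move: hT; rewrite hB setU0 => ->; rewrite eqxx /= ?andbT.
  - by rewrite andbF.
rewrite cardsD cU (setIidPr _).
  by rewrite cards2 xpair_eqE negb_and eq_sym TS.
apply/subsetP=> e; rewrite !inE => /orP[]/eqP -> /=; apply/forallP=> x;
  rewrite ffunE !inE /=; by rewrite ?orbT.
Qed.

Lemma count_s (s : 'S_n) : 1 < n ->
  #|[set e | (e \in Eqn n) && (s \in G e.1 e.2)]| = 3 ^ n.-1 + 3 ^ n.-2.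
Proof.
move=> hn.
have [a ha] := perm_ex s (ltnW hn); have [b hb] := perm_ex s hn.
have ab : a != b by apply/eqP=> e; move: ha; rewrite e hb.
pose Q1 x (j : bool * bool) := if x == a then j == (true, true) else j != (false, false).
pose Q2 x (j : bool * bool) := if x == a then j == (true, false)
   else if x == b then j == (false, true) else j != (false, false).
have c1 : #|[set e | [forall x, Q1 x (enc e x)]]| = 3 ^ n.-1.
  rewrite count_fam (bigD1 a) //= /Q1 eqxx sum1 mul1n -(prodC1 a).
  by apply: eq_bigr => x /negbTE ->; rewrite sumC1.
have c2 : #|[set e | [forall x, Q2 x (enc e x)]]| = 3 ^ n.-2.
  rewrite count_fam (bigD1 a) //= /Q2 eqxx sum1 mul1n (bigD1 b) /=; last by rewrite eq_sym.
  rewrite eq_sym (negbTE ab) eqxx sum1 mul1n.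
  rewrite (eq_bigr (fun _ => 3)); last first.
    by move=> x /andP[/negbTE -> /negbTE ->]; rewrite sumC1.
  rewrite -(@eq_bigl _ _ _ _ _ [in [set~ a] :\ b]); last by move=> x; rewrite !inE andbC.
  have := cardsD1 b [set~ a]; rewrite !inE eq_sym ab cardsC1 card_ord /= => h.
  by rewrite prod_nat_const (_ : #|_| = n.-2) // h.
have t1E A B : t1 A B s = (a \in A) && (a \in B).
  apply/forallP/andP => [h | [hA hB] i].
    by have := h a; rewrite ha eqxx /=; move/andP.
  apply/implyP => /eqP hi; by rewrite (perm_natinj (etrans hi (esym ha))) hA hB.
have t2E A B : t2 A B s = [&& a \in A, a \notin B, b \in B & b \notin A].
  apply/forallP/and4P => [h | [hA hB hA' hB'] i].
    have /andP[_ /implyP hb1] := h b; have /andP[/implyP ha1 _] := h a.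
    have /andP[-> ->] := ha1 (introT eqP ha).
    by have /andP[-> ->] := hb1 (introT eqP hb).
  apply/andP; split; apply/implyP => /eqP hi.
    by rewrite (perm_natinj (etrans hi (esym ha))) hA hB.
  by rewrite (perm_natinj (etrans hi (esym hb))) hA' hB'.
have Q1E A B : [forall x, Q1 x (enc (A, B) x)] = [&& a \in A, a \in B & A :|: B == setT].
  rewrite -fam_U; apply/forallP/and3P => [h|[hA hB /forallP h] x].
    split.
    - by have := h a; rewrite /Q1 eqxx ffunE /= => /eqP[-> _].
    - by have := h a; rewrite /Q1 eqxx ffunE /= => /eqP[_ ->].
    - apply/forallP=> x; have := h x; rewrite /Q1; case: eqP => [-> /eqP -> //|_ //].
  by rewrite /Q1; case: eqP => [->|_]; [rewrite ffunE hA hB | exact: h x].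
have Q2E A B : [forall x, Q2 x (enc (A, B) x)] =
    [&& a \in A, a \notin B, b \in B, b \notin A & A :|: B == setT].
  rewrite -fam_U; apply/forallP/and5P => [h|[hA hB hA' hB' /forallP h] x].
    have := h a; rewrite /Q2 eqxx ffunE /= => /eqP[-> ->].
    have := h b; rewrite /Q2 eqxx eq_sym (negbTE ab) ffunE /= => /eqP[-> ->].
    split => //; apply/forallP=> x; have := h x; rewrite /Q2.
    case: eqP => [-> /eqP -> //|_]; case: eqP => [-> /eqP -> //|_ //].
  rewrite /Q2; case: eqP => [->|_]; first by rewrite ffunE /= hA (negbTE hB).
  case: eqP => [->|_]; first by rewrite ffunE /= hA' (negbTE hB').
  exact: h x.
have ne (C : {set 'I_n}) x : x \in C -> (C != set0) = true.
  by move=> h; apply/set0Pn; exists x.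
have -> : [set e | (e \in Eqn n) && (s \in G e.1 e.2)] =
   [set e | [forall x, Q1 x (enc e x)]] :|: [set e | [forall x, Q2 x (enc e x)]].
  apply/setP => [[A B]]; rewrite !inE /= Q1E Q2E t1E t2E /is_equation /=.
  case aA: (a \in A); case aB: (a \in B); case bA: (b \in A); case bB: (b \in B);
    rewrite /= ?andbF ?andbT ?orbF // ?(ne _ _ aA) ?(ne _ _ aB) ?(ne _ _ bA) ?(ne _ _ bB) //=.
rewrite cardsU c1 c2 (_ : _ :&: _ = set0) ?cards0 ?subn0 //.
apply/setP => [[A B]]; rewrite !inE Q1E Q2E.
by case: (a \in B); rewrite ?andbF.
Qed.

End Count.


Lemma sum_bool (T : finType) (P : pred T) : \sum_x (P x : nat) = #|[set x | P x]|.
Proof. by rewrite -sum1dep_card [RHS]big_mkcond; apply: eq_bigr => x _; case: (P x). Qed.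

Lemma main_sum (n L : nat) (hn : 1 < n) (hnl : n <= L.+1) :
  \sum_(e in Eqn n) Irr (solutions L.+1 e) = 4 * n`! * 3 ^ (n - 2).
Proof.
rewrite (eq_bigr (fun e : equation n => #|G e.1 e.2|)); last first.
  case=> A B; rewrite inE /is_equation /= => /andP[/andP[hA hB] /eqP hAB].
  exact: Irr_sol.
transitivity (\sum_(s : 'S_n) #|[set e | (e \in Eqn n) && (s \in G e.1 e.2)]|).
  rewrite (eq_bigr (fun e => \sum_(s : 'S_n) ((s \in G e.1 e.2) : nat))); last first.
    by move=> e _; rewrite sum_bool; apply: eq_card => s; rewrite inE.
  rewrite big_mkcond (eq_bigr (fun e => \sum_(s : 'S_n)
     (((e \in Eqn n) && (s \in G e.1 e.2)) : nat))); last first.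
    by move=> e _; case: (e \in Eqn n) => //=; rewrite big1.
  by rewrite exchange_big /=; apply: eq_bigr => s _; rewrite sum_bool.
rewrite (eq_bigr (fun _ => 3 ^ n.-1 + 3 ^ n.-2)); last by move=> s _; apply: count_s.
rewrite sum_nat_const cardT -cardE card_Sn.
have -> : n.-1 = (n - 2).+1 by lia.
rewrite /=.
rewrite expnS; nia.
Qed.

Local Open Scope ring_scope.

Theorem mainTheorem6 (n l : nat) (hn : (2 <= n)%N) (hnl : (n <= l)%N) :
  ((\sum_(e in Eqn n) Irr (solutions l e))%:R / (#|Eqn n|)%:R : rat)
  = ((4 * n`! * 3 ^ (n - 2))%N)%:R / ((3 ^ n - 2)%N)%:R.
Proof.
case: l hnl => [|L] hnl; first by move: (leq_trans hn hnl).
by rewrite main_sum // Eqn_card // ltnW.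
Qed.
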